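(* The generator $a$ is not left invertible in $\Pi_2=\langle a,b,c\mid (ab^ic)^2=1\ (i\geq 1)\rangle$: there is no word $u\in\{a,b,c\}^\ast$ with $ua=1$ in $\Pi_2$. In particular, $a$ is not invertible in $\Pi_2$. *)

(* Defs.v *)
(* monoid presentation Pi_2 = < a, b, c | (a b^i c)^2 = 1 (i >= 1) >
   presented as a monoid: words are sequences over the alphabet {a,b,c},
   and equality in Pi_2 is the congruence on the free monoid generated by
   the defining relations. *)
From mathcomp Require Import all_boot.
Set Implicit Arguments. Unset Strict Implicit. Unset Printing Implicit Defensive.

Inductive gen : Type := ga | gb | gc.

Definition word := seq gen.

Definition abc (i : nat) : word := ga :: nseq i gb ++ [:: gc].

Definition Pi2_rel (l r : word) : Prop :=
  exists2 i, 1 <= i & l = abc i ++ abc i /\ r = [::].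

Inductive mon_cong (R : word -> word -> Prop) : word -> word -> Prop :=
| mc_rel  : forall x y l r, R l r -> mon_cong R (x ++ l ++ y) (x ++ r ++ y)
| mc_refl : forall w, mon_cong R w w
| mc_sym  : forall u v, mon_cong R u v -> mon_cong R v u
| mc_trans : forall u v w, mon_cong R u v -> mon_cong R v w -> mon_cong R u w.

Definition Pi2_eq (u v : word) : Prop := mon_cong Pi2_rel u v.

(* Main.v *)
Require Import Defs.
From mathcomp Require Import all_boot.

Definition step (n : nat) (g : gen) : nat :=
  match g with ga => n.+1 | gb => n | gc => n.-1 end.

Definition act (w : word) (n : nat) : nat := foldl step n w.

Lemma act_nseq i n : act (nseq i gb) n = n.
Proof. by elim: i. Qed.

Lemma act_abc i n : act (abc i) n = n.
Proof. rewrite /act /abc /= foldl_cat. have := act_nseq i n.+1. rewrite /act => ->. by []. Qed.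

Lemma act_inv u v : Pi2_eq u v -> forall n, act u n = act v n.
Proof.
move=> H; elim: H => //.
- move=> x y l r [i _ [El Er]] n; rewrite El Er.
  by rewrite /act !foldl_cat -!/(act _ _) ?act_abc.
- by move=> u0 v0 w0 _ IH1 _ IH2 n; rewrite IH1 IH2.
Qed.

Theorem mainTheorem5 : ~ exists u : word, Pi2_eq (u ++ [:: ga]) [::].
Proof.
case=> u /act_inv /(_ 0).
by rewrite /act foldl_cat.
Qed.
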